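(* Let $T$ be a tree of order $n$ with $\operatorname{diam}(T)\geq 4$, and let $T_1$ be a tree obtained from $T$ by a proper generalized tree shift. Then $\mu_1(\overline{T_1})> \mu_1(\overline{T})$, where $\mu_1(G)$ denotes the distance signless Laplacian spectral radius of $G$ and $\overline{G}$ denotes the complement of $G$.
   Context: For a connected graph $G$ with vertices $v_1,\dots,v_n$, the distance matrix $D(G)$ has $(v_i,v_j)$-entry equal to the distance $d_G(v_i,v_j)$. The transmission $\operatorname{Tr}(v_i)=\sum_j d_G(v_i,v_j)$, and $\operatorname{Tr}(G)=\operatorname{diag}(\operatorname{Tr}(v_1),\dots,\operatorname{Tr}(v_n))$. The distance signless Laplacian matrix is $D^Q(G)=\operatorname{Tr}(G)+D(G)$, and $\mu_1(G)$ is its largest eigenvalue. The complement $\overline{G}$ has the same vertex set as $G$, with two distinct vertices adjacent iff they are non-adjacent in $G$. Generalized tree shift (GTS): let $T$ be a tree and $u,v\in V(T)$ such that all interior vertices of the path $uPv$ from $u$ to $v$ in $T$ (if any) have degree $2$. Let $w$ be the neighbor of $v$ on the path $uPv$ (possibly $w=u$). The tree $T_1$ is obtained from $T$ by deleting all edges between $v$ and $N_T(v)\setminus\{w\}$ and adding all edges between $u$ and $N_T(v)\setminus\{w\}$. The GTS is called proper if neither $u$ nor $v$ is a pendant vertex of $T$; in that case $T_1$ has one more pendant vertex than $T$. *)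

(* Defs.v *)
From HB Require Import structures.
From mathcomp Require Import all_boot all_order all_algebra.
From mathcomp Require Import all_reals.
Set Implicit Arguments. Unset Strict Implicit. Unset Printing Implicit Defensive.
Import Order.TTheory GRing.Theory Num.Theory.

Definition simple_graph n (e : rel 'I_n) := symmetric e /\ irreflexive e.

Definition connected_graph n (e : rel 'I_n) := forall x y, connect e x y.

Definition acyclic n (e : rel 'I_n) :=
  forall s : seq 'I_n, uniq s -> 3 <= size s -> ~~ cycle e s.

Definition is_tree n (e : rel 'I_n) :=
  [/\ simple_graph e, connected_graph e & acyclic e].

Definition deg n (e : rel 'I_n) (x : 'I_n) : nat := #|[set y | e x y]|.

Fixpoint walk_le n (e : rel 'I_n) (k : nat) (x y : 'I_n) : bool :=
  if k is k'.+1 then walk_le e k' x y || [exists z, e x z && walk_le e k' z y]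
  else x == y.

(* distance: least k with a walk of length <= k (for connected graphs this is
   the usual graph distance; it is < n) *)
Definition dist n (e : rel 'I_n) (x y : 'I_n) : nat :=
  find (fun k => walk_le e k x y) (iota 0 n).

Definition diam_ge n (e : rel 'I_n) (k : nat) := exists x y, k <= dist e x y.

Definition complement n (e : rel 'I_n) : rel 'I_n :=
  [rel x y | (x != y) && ~~ e x y].

Definition transmission n (e : rel 'I_n) (x : 'I_n) : nat :=
  \sum_(y < n) dist e x y.

Local Open Scope ring_scope.
Definition distQ (R : realType) n (e : rel 'I_n) : 'M[R]_n :=
  \matrix_(i, j) ((if i == j then (transmission e i)%:R else 0) + (dist e i j)%:R).

Definition largest_eigenvalue (R : realType) n (M : 'M[R]_n) (mu : R) :=
  eigenvalue M mu /\ forall nu, eigenvalue M nu -> nu <= mu.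

Local Close Scope ring_scope.
(* generalized tree shift: move N(v) \ {w} from v to u *)
Definition gts n (e : rel 'I_n) (u v w : 'I_n) : rel 'I_n :=
  let S := fun x => e v x && (x != w) in
  [rel x y | (e x y && ~~ ((x == v) && S y || (y == v) && S x))
             || ((x == u) && S y || (y == u) && S x)].

(* Main.v *)
Require Import Defs.
From HB Require Import structures.
From mathcomp Require Import all_boot all_order all_algebra.
From mathcomp Require Import all_reals.
From mathcomp Require Import zify.
Set Implicit Arguments. Unset Strict Implicit. Unset Printing Implicit Defensive.
Import Order.TTheory GRing.Theory Num.Theory.


Section Walk.
Variable n : nat.
Variable e : rel 'I_n.

Lemma walk_le_S k x y : walk_le e k x y -> walk_le e k.+1 x y.
Proof. by move=> h /=; rewrite h. Qed.

Lemma walk_le_mono k j x y : walk_le e k x y -> walk_le e (k + j) x y.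
Proof.
elim: j => [|j IH]; first by rewrite addn0.
by move=> h; rewrite addnS; apply: walk_le_S; apply: IH.
Qed.

Lemma walk_le_cat k m x y z :
  walk_le e k x y -> walk_le e m y z -> walk_le e (k + m) x z.
Proof.
elim: k x => [|k IH] x /=.
  by move=> /eqP ->.
move=> /orP [h|/existsP [t /andP [ext ht]]] hm.
  by rewrite ?addSn; apply: walk_le_S; apply: IH h hm.
rewrite ?addSn /=; apply/orP; right; apply/existsP; exists t.
by rewrite ext (IH _ ht hm).
Qed.

Lemma walk_le1 x y : walk_le e 1 x y = (x == y) || e x y.
Proof.
rewrite /=; congr (_ || _); apply/existsP/idP => [[t /andP [h /eqP <-]] //|h].
by exists y; rewrite h eqxx.
Qed.

Lemma walk_le_sym k x y : symmetric e -> walk_le e k x y = walk_le e k y x.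
Proof.
move=> se.
suff H : forall k x y, walk_le e k x y -> walk_le e k y x.
  by apply/idP/idP; apply: H.
elim=> [|k' IH] a b /=; first by rewrite eq_sym.
move=> /orP [h|/existsP [t /andP [ext ht]]].
  by rewrite (IH _ _ h).
have := walk_le_cat (IH _ _ ht) (_ : walk_le e 1 t a).
rewrite addn1; apply.
by rewrite walk_le1 se ext orbT.
Qed.

Lemma dist_le k x y : walk_le e k x y -> (dist e x y <= k)%N.
Proof.
move=> h; rewrite /dist.
case: (ltnP k n) => kn.
  rewrite leqNgt; apply/negP => lt.
  have := before_find 0%N lt; rewrite nth_iota ?add0n // => /negP; apply.
  by [].
by apply: leq_trans (find_size _ _) _; rewrite size_iota.
Qed.

Lemma dist_ge k x y : (k <= n)%N -> (forall j, (j < k)%N -> ~~ walk_le e j x y) ->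
  (k <= dist e x y)%N.
Proof.
move=> kn h; rewrite /dist leqNgt; apply/negP => lt.
have lts : (find (fun k => walk_le e k x y) (iota 0 n) < size (iota 0 n))%N.
  by rewrite size_iota; apply: leq_trans lt kn.
have hs : has (fun k => walk_le e k x y) (iota 0 n) by rewrite has_find.
have := nth_find 0%N hs.
rewrite nth_iota ?add0n; last by rewrite size_iota in lts.
by move=> hw; move: (h _ lt); rewrite hw.
Qed.

Lemma dist_sym x y : symmetric e -> dist e x y = dist e y x.
Proof.
move=> se; rewrite /dist; apply: eq_find => k.
exact: walk_le_sym.
Qed.
Lemma dist_sym' x y : symmetric e -> dist e x y = dist e y x.
Proof. exact: dist_sym. Qed.

Lemma dist_self x : dist e x x = 0%N.
Proof.
apply/eqP; rewrite -leqn0; apply: dist_le; exact: eqxx.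
Qed.

End Walk.

Section Comp.
Variable n : nat.

Lemma comp_lb (g : rel 'I_n) i j : (1 < n)%N -> j != i ->
  (1 + g i j <= dist (complement g) i j)%N.
Proof.
move=> n2 ji; apply: dist_ge.
  by case: (g i j) => //; apply: ltnW.
move=> k; case: k => [|[|k]] lt.
- by rewrite /= eq_sym.
- case gij: (g i j) lt => // _.
  by rewrite walk_le1 /complement /= gij andbF orbF eq_sym.
- by case: (g i j) lt.
Qed.

Lemma comp_ub1 (g : rel 'I_n) i j : j != i -> ~~ g i j ->
  (dist (complement g) i j <= 1)%N.
Proof.
move=> ji ng; apply: dist_le; rewrite walk_le1 /complement /= [i == j]eq_sym ji ng.
by rewrite orbT.
Qed.

Lemma comp_ub2 (g : rel 'I_n) i j z : complement g i z -> complement g z j ->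
  (dist (complement g) i j <= 2)%N.
Proof.
move=> h1 h2; apply: dist_le.
have := walk_le_cat (k := 1) (m := 1) (_ : walk_le (complement g) 1 i z)
  (_ : walk_le (complement g) 1 z j).
by apply; rewrite walk_le1 ?h1 ?h2 orbT.
Qed.

Lemma tree_common (e : rel 'I_n) : symmetric e -> diam_ge e 4 ->
  forall i j, e i j -> exists z, [&& z != i, z != j, ~~ e i z & ~~ e j z].
Proof.
move=> se [x [y dxy]] i j eij.
case: (boolP [exists z, [&& z != i, z != j, ~~ e i z & ~~ e j z]]).
  by move=> /existsP.
rewrite negb_exists => /forallP H.
have near : forall z, walk_le e 1 z i || walk_le e 1 z j.
  move=> z; move: (H z); rewrite !walk_le1 !negb_and !negbK (se z i) (se z j).
  by case/or4P => ->; rewrite ?orbT.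
have ab : forall a b, (a == i) || (a == j) -> (b == i) || (b == j) ->
    walk_le e 1 a b.
  move=> a b /orP [] /eqP -> /orP [] /eqP ->; rewrite walk_le1 ?eqxx //.
    by rewrite eij orbT.
  by rewrite se eij orbT.
have [a xa aij] : exists2 a, walk_le e 1 x a & (a == i) || (a == j).
  by case/orP: (near x) => h; [exists i | exists j]; rewrite ?eqxx ?orbT.
have [b yb bij] : exists2 b, walk_le e 1 b y & (b == i) || (b == j).
  case/orP: (near y) => h; [exists i | exists j]; rewrite ?eqxx ?orbT //;
  by rewrite walk_le_sym.
have w3 : walk_le e 3 x y.
  have := walk_le_cat (walk_le_cat xa (ab a b aij bij)) yb; exact.
by have := dist_le w3; rewrite leqNgt (leq_trans _ dxy).
Qed.

Lemma comp_ub (e : rel 'I_n) : symmetric e -> diam_ge e 4 ->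
  forall i j, j != i -> (dist (complement e) i j <= 1 + e i j)%N.
Proof.
move=> se dm i j ji; case eij: (e i j); last by rewrite comp_ub1 ?eij.
have [z /and4P [zi zj niz njz]] := tree_common se dm eij.
apply: (comp_ub2 (z := z)).
  by rewrite /complement /= eq_sym zi niz.
by rewrite /complement /= zj se njz.
Qed.

End Comp.

Lemma path_map_iota (T : Type) (r : rel T) (f : nat -> T) m i :
  (forall t, (i <= t)%N -> (t < i + m)%N -> r (f t) (f t.+1)) ->
  path r (f i) (map f (iota i.+1 m)).
Proof.
elim: m i => [|m IH] i H //=.
rewrite (H i) ?leqnn ?addnS ?ltnS ?leq_addr //=.
apply: IH => t it tm; apply: H; first by apply: ltnW.
by rewrite addnS.
Qed.

Lemma last_map_iota (T : Type) (f : nat -> T) m i :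
  last (f i) (map f (iota i.+1 m)) = f (i + m).
Proof.
elim: m i => [|m IH] i /=; first by rewrite addn0.
by rewrite IH addSnnS.
Qed.

Section Config.
Variable n : nat.
Variable e : rel 'I_n.
Hypothesis se : symmetric e.
Hypothesis ie : irreflexive e.
Hypothesis ac : acyclic e.
Variables (u v : 'I_n) (q : seq 'I_n).
Hypothesis pth : path e u (rcons q v).
Hypothesis un : uniq (u :: rcons q v).
Hypothesis dg : all (fun x => deg e x == 2)%N q.

Lemma no_chord a s : uniq (a :: s) -> (2 <= size s)%N -> path e a s ->
  ~~ e (last a s) a.
Proof.
move=> us ss ps; have := ac us (ss : (3 <= size (a :: s))%N).
by rewrite /cycle rcons_path ps.
Qed.

Definition pp := u :: rcons q v.
Definition kk := size pp.
Definition PP t := nth u pp t.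

Lemma kkE : kk = (size q).+2.
Proof. by rewrite /kk /pp /= size_rcons. Qed.

Lemma PP_edge t : (t.+1 < kk)%N -> e (PP t) (PP t.+1).
Proof.
move=> tk; move/(pathP u): pth => /(_ t); rewrite /PP /pp /=.
by apply; move: tk; rewrite /kk /pp /= ltnS.
Qed.

Lemma PP_inj i j : (i < kk)%N -> (j < kk)%N -> (PP i == PP j) = (i == j).
Proof. by move=> ik jk; rewrite /PP nth_uniq. Qed.

Lemma chord i j : (i.+1 < j)%N -> (j < kk)%N -> ~~ e (PP i) (PP j).
Proof.
move=> ij jk.
set m := (j - i)%N.
have jE : j = (i + m)%N by rewrite /m subnKC // ltnW // ltnW.
have := no_chord (a := PP i) (s := map PP (iota i.+1 m)).
rewrite last_map_iota -jE (se (PP j)).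
apply.
- rewrite -[_ :: _]/(map PP (iota i m.+1)) map_inj_in_uniq ?iota_uniq //.
  move=> a b; rewrite !mem_iota => /andP [_ ha] /andP [_ hb] /eqP.
  have hk : (i + m.+1 <= kk)%N by rewrite addnS -jE.
  by rewrite PP_inj ?(leq_trans ha hk) ?(leq_trans hb hk) // => /eqP.
- by rewrite size_map size_iota /m; lia.
- apply: path_map_iota => t it tm; apply: PP_edge.
  by rewrite -jE in tm; apply: leq_ltn_trans tm jk.
Qed.

Lemma mem_PP a : a \in pp -> PP (index a pp) = a.
Proof. by move=> h; rewrite /PP nth_index. Qed.
Lemma index_lt a : a \in pp -> (index a pp < kk)%N.
Proof. by rewrite /kk index_mem. Qed.
Lemma idx_PP t : (t < kk)%N -> index (PP t) pp = t.
Proof. by move=> h; rewrite /PP index_uniq. Qed.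
Lemma PP_in t : (t < kk)%N -> PP t \in pp.
Proof. by move=> h; rewrite /PP mem_nth. Qed.
Lemma u_in : u \in pp.
Proof. by rewrite /pp inE eqxx. Qed.
Lemma v_in : v \in pp.
Proof. by rewrite /pp inE mem_rcons inE eqxx orbT. Qed.
Lemma index_u : index u pp = 0%N.
Proof. by rewrite /pp /= eqxx. Qed.
Lemma PPlast : PP kk.-1 = v.
Proof. by rewrite /PP nth_last /pp /= last_rcons. Qed.
Lemma index_v : index v pp = kk.-1.
Proof. by rewrite -PPlast idx_PP // kkE. Qed.

Lemma uv : u != v.
Proof.
move: un; rewrite /= mem_rcons inE negb_or => /andP [/andP [h _] _].
exact: h.
Qed.

Lemma e_pp a b : a \in pp -> b \in pp ->
  e a b = (index b pp == (index a pp).+1) || (index a pp == (index b pp).+1).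
Proof.
move=> ap bp.
have -> : e a b = e (PP (index a pp)) (PP (index b pp)) by rewrite !mem_PP.
have ak := index_lt ap; have bk := index_lt bp.
move: (index a pp) (index b pp) ak bk => i j ik jk.
case: (ltngtP i j) => [ij|ji|->].
- case: (eqVneq j i.+1) => [jE|jn] /=.
    by rewrite jE PP_edge -?jE ?eqxx.
  have ij1 : (i.+1 < j)%N by rewrite ltn_neqAle eq_sym jn ij.
  rewrite (negbTE (chord ij1 jk)); apply/esym/negbTE.
  by rewrite neq_ltn ltnS ltnW.
- case: (eqVneq i j.+1) => [iE|jn] /=.
    by rewrite iE se PP_edge -?iE ?eqxx ?orbT.
  have ji1 : (j.+1 < i)%N by rewrite ltn_neqAle eq_sym jn ji.
  rewrite se (negbTE (chord ji1 ik)) orbF; apply/esym/negbTE.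
  by rewrite neq_ltn ltnS ltnW.
- by rewrite ie orbb; apply/esym/negbTE; rewrite neq_ltn ltnSn.
Qed.

Lemma interior_no_out a b : a \in pp -> a != u -> a != v -> b \notin pp ->
  ~~ e a b.
Proof.
move=> ap au av bp.
have aq : a \in q.
  by move: ap; rewrite /pp inE (negbTE au) /= mem_rcons inE (negbTE av).
have da : deg e a = 2%N by apply/eqP; exact: (allP dg).
set i := index a pp.
have ik : (i < kk)%N by exact: index_lt.
have aE : PP i = a by exact: mem_PP.
have i0 : (0 < i)%N.
  rewrite lt0n; apply/eqP => i0; move: au; rewrite -aE i0 /PP /pp /=.
  by rewrite eqxx.
have ik1 : (i.+1 < kk)%N.
  rewrite ltn_neqAle ik andbT; apply/eqP => h; move: av.
  by rewrite -aE -PPlast -h /= eqxx.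
have e1 : e a (PP i.-1).
  by rewrite -aE se -{2}(prednK i0) PP_edge // prednK.
have e2 : e a (PP i.+1) by rewrite -aE PP_edge.
apply/negP => eab.
have pr : [set PP i.-1; PP i.+1] \proper [set y | e a y].
  apply/properP; split.
    by apply/subsetP => y; rewrite !inE => /orP [] /eqP ->.
  exists b; first by rewrite inE.
  rewrite !inE negb_or; apply/andP; split; apply/eqP => h; move: bp;
  by rewrite h PP_in // ?(leq_ltn_trans (leq_pred i) ik).
have := proper_card pr; rewrite cards2 -/(deg e a) da PP_inj ?ltnS //.
- by rewrite neq_ltn (leq_ltn_trans (leq_pred i) (ltnSn i)).
- exact: (leq_ltn_trans (leq_pred i) ik).
Qed.

Definition ww := last u q.
Definition SS j := e v j && (j != ww).

Lemma w_PP : ww = PP kk.-2.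
Proof.
rewrite kkE /ww /PP /pp -rcons_cons nth_rcons /= ltnS leqnn.
by rewrite -[size q]/((size (u :: q)).-1) nth_last.
Qed.

Lemma w_in : ww \in pp.
Proof. by rewrite w_PP PP_in // kkE. Qed.

Lemma e_w_v : e v ww.
Proof. by move: pth; rewrite rcons_path se => /andP []. Qed.

Lemma SS_E j : SS j = (j \notin pp) && e v j.
Proof.
case: (boolP (j \in pp)) => jp /=; last first.
  rewrite /SS; case: (e v j) => //=; apply/eqP => h; move: jp.
  by rewrite h w_in.
rewrite /SS; case evj: (e v j) => //=.
move: evj; rewrite e_pp ?v_in // index_v.
have jk := index_lt jp.
case/orP => /eqP h.
  by move: jk; rewrite h kkE /= ltnn.
apply/negbTE; rewrite negbK w_PP -(mem_PP jp); apply/eqP; congr PP.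
by move: h; rewrite kkE /= => -[->].

Qed.

Lemma SSu : ~~ SS u.
Proof. by rewrite SS_E u_in. Qed.
Lemma SSv : ~~ SS v.
Proof. by rewrite SS_E v_in. Qed.
Lemma SS_e j : SS j -> e v j.
Proof. by case/andP. Qed.

Lemma SS_ne_u j : SS j -> ~~ e u j.
Proof.
rewrite SS_E => /andP [jp evj].
rewrite se; have := no_chord (a := u) (s := rcons (rcons q v) j).
rewrite last_rcons; apply.
- by rewrite -rcons_cons rcons_uniq jp un.
- by rewrite !size_rcons.
- by rewrite rcons_path pth last_rcons.
Qed.

Lemma SS_ex : deg e v != 1%N -> exists j, SS j.
Proof.
move=> hd.
case: (boolP [exists j, SS j]) => [/existsP //|].
rewrite negb_exists => /forallP H; exfalso; move: hd; rewrite /deg.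
have -> : [set y | e v y] = [set ww].
  apply/setP => y; rewrite !inE; apply/idP/idP => [evy|/eqP ->].
    by move: (H y); rewrite /SS evy /= negbK.
  exact: e_w_v.
by rewrite cards1.
Qed.

Lemma gts_char a b : gts e u v ww a b =
  (e a b && ~~ ((a == v) && SS b || (b == v) && SS a))
  || ((a == u) && SS b || (b == u) && SS a).
Proof. by []. Qed.

End Config.

Lemma gts_sym n (e : rel 'I_n) u v w : symmetric e -> symmetric (gts e u v w).
Proof.
move=> se a b; rewrite /gts /= se.
by rewrite [(b == v) && _ || _]orbC [(b == u) && _ || _]orbC.
Qed.

Lemma gts_irr n (e : rel 'I_n) u v w : irreflexive e ->
  ~~ (e v u && (u != w)) -> irreflexive (gts e u v w).
Proof.
move=> ie h a; rewrite /gts /= ie /= orbb.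
by case: (eqVneq a u) => [->|] //=; rewrite (negbTE h).
Qed.


Section Iso.
Variable n : nat.
Variable e : rel 'I_n.
Hypothesis se : symmetric e.
Hypothesis ie : irreflexive e.
Hypothesis ac : acyclic e.
Variables (u v : 'I_n) (q : seq 'I_n).
Hypothesis pth : path e u (rcons q v).
Hypothesis un : uniq (u :: rcons q v).
Hypothesis dg : all (fun x => deg e x == 2)%N q.

Lemma pth' : path e v (rcons (rev q) u).
Proof.
have := rev_path e u (rcons q v).
rewrite last_rcons belast_rcons rev_cons => ->.
by rewrite (eq_path (e' := e)) // => a b; rewrite se.
Qed.

Lemma pp_rev : pp v u (rev q) = rev (pp u v q).
Proof. by rewrite /pp rev_cons rev_rcons. Qed.

Lemma un' : uniq (v :: rcons (rev q) u).
Proof. by rewrite -[_ :: _]/(pp v u (rev q)) pp_rev rev_uniq. Qed.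

Lemma dg' : all (fun x => deg e x == 2)%N (rev q).
Proof. by rewrite all_rev. Qed.

Local Notation P := (pp u v q).
Local Notation k := (kk u v q).

Definition sigr (a : 'I_n) := if a \in P then nth u (rev P) (index a P) else a.

Lemma sig_in a : (sigr a \in P) = (a \in P).
Proof.
rewrite /sigr; case: ifP => // ap; rewrite -mem_rev mem_nth // size_rev.
exact: index_lt.
Qed.

Lemma sig_out a : a \notin P -> sigr a = a.
Proof. by rewrite /sigr => /negbTE ->. Qed.

Lemma idx_sig a : a \in P -> index (sigr a) P = (k - (index a P).+1)%N.
Proof.
move=> ap; rewrite /sigr ap nth_rev; last exact: index_lt.
by rewrite -/(PP u v q _) idx_PP // -[size P]/(kk u v q) ltn_subrL kkE.
Qed.

Lemma sig_inv a : sigr (sigr a) = a.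
Proof.
case: (boolP (a \in P)) => ap; last by rewrite !sig_out.
have sp : sigr a \in P by rewrite sig_in.
rewrite /sigr sp -/(sigr a) idx_sig // nth_rev; last first.
  by rewrite -[size P]/(kk u v q) ltn_subrL kkE.
have ik := index_lt ap.
rewrite subnSK // subKn ?(ltnW ik) //.
exact: nth_index.
Qed.

Lemma sig_inj : injective sigr.
Proof. by move=> a b h; rewrite -(sig_inv a) h sig_inv. Qed.

Lemma sig_u : sigr u = v.
Proof.
rewrite /sigr u_in index_u nth_rev; last by rewrite /P /pp.
rewrite subn1 -/(PP u v q _) PPlast //.
Qed.

Lemma sig_v : sigr v = u.
Proof. by rewrite -sig_u sig_inv. Qed.

Lemma sig_eq_u a : (sigr a == u) = (a == v).
Proof. by rewrite -sig_v (inj_eq sig_inj). Qed.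
Lemma sig_eq_v a : (sigr a == v) = (a == u).
Proof. by rewrite -sig_u (inj_eq sig_inj). Qed.

Lemma char1 a b : gts e u v (ww u q) a b =
  (e a b && ~~ ((a == v) && ((b \notin P) && e v b) || (b == v) && ((a \notin P) && e v a)))
  || ((a == u) && ((b \notin P) && e v b) || (b == u) && ((a \notin P) && e v a)).
Proof. by rewrite gts_char !SS_E. Qed.

Lemma char2 a b : gts e v u (ww v (rev q)) a b =
  (e a b && ~~ ((a == u) && ((b \notin P) && e u b) || (b == u) && ((a \notin P) && e u a)))
  || ((a == v) && ((b \notin P) && e u b) || (b == v) && ((a \notin P) && e u a)).
Proof.
have E : forall x, (x \in pp v u (rev q)) = (x \in P) by move=> x; rewrite pp_rev mem_rev.
by rewrite gts_char !(SS_E se ie ac pth' un' dg') !E.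
Qed.

Lemma iso_TF a b : a \in P -> b \notin P ->
  gts e u v (ww u q) (sigr a) (sigr b) = gts e v u (ww v (rev q)) a b.
Proof.
move=> ap bp.
have bu : (b == u) = false by apply/negbTE; apply: contraNneq bp => ->; exact: u_in.
have bv : (b == v) = false by apply/negbTE; apply: contraNneq bp => ->; exact: v_in.
have uvF : (u == v) = false by apply/negbTE; exact: (uv un).
rewrite char1 char2 (sig_out bp) sig_in ap bp bu bv /= ?andbF ?orbF sig_eq_u sig_eq_v.
case: (eqVneq a u) => [->|au]; first by rewrite sig_u ?eqxx ?uvF /= ?andbN.
case: (eqVneq a v) => [->|av]; first by rewrite sig_v /= !andbT orbC.
have sa : sigr a \in P by rewrite sig_in.
have sau : sigr a != u by rewrite sig_eq_u.
have sav : sigr a != v by rewrite sig_eq_v.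
rewrite (negbTE (interior_no_out se pth un dg ap au av bp)).
rewrite (negbTE (interior_no_out se pth un dg sa sau sav bp)).
by [].
Qed.

Lemma iso a b :
  gts e u v (ww u q) (sigr a) (sigr b) = gts e v u (ww v (rev q)) a b.
Proof.
case: (boolP (a \in P)) => ap; case: (boolP (b \in P)) => bp.
- have sa : sigr a \in P by rewrite sig_in.
  have sb : sigr b \in P by rewrite sig_in.
  rewrite char1 char2 sa sb ap bp /= ?andbF ?orbF.
  rewrite !(e_pp se ie ac pth un) // !idx_sig // -[~~ false]/true !andbT.
  have := index_lt ap; have := index_lt bp.
  move: (index a P) (index b P) => i j jk ik.
  apply/idP/idP => /orP [] /eqP h; apply/orP.
  + by right; apply/eqP; lia.
  + by left; apply/eqP; lia.
  + by right; apply/eqP; lia.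
  + by left; apply/eqP; lia.
- exact: iso_TF.
- by rewrite gts_sym // [RHS]gts_sym // iso_TF.
- have au : (a == u) = false by apply/negbTE; apply: contraNneq ap => ->; exact: u_in.
  have av : (a == v) = false by apply/negbTE; apply: contraNneq ap => ->; exact: v_in.
  have bu : (b == u) = false by apply/negbTE; apply: contraNneq bp => ->; exact: u_in.
  have bv : (b == v) = false by apply/negbTE; apply: contraNneq bp => ->; exact: v_in.
  by rewrite !sig_out // char1 char2 au av bu bv.
Qed.

End Iso.

From mathcomp Require Import all_classical all_analysis.
From mathcomp Require Import ring lra.
Require Import Defs.
Import Order.TTheory GRing.Theory Num.Theory.
Local Open Scope ring_scope.
Import numFieldTopology.Exports numFieldNormedType.Exports.
Local Open Scope ring_scope.

Section LA.
Variable R : realType.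
Variable n : nat.
Implicit Types (M K : 'M[R]_n) (x y a b : 'rV[R]_n).

Definition bf K a b : R := (a *m K *m b^T) 0 0.
Definition nrm2 y : R := \sum_i y 0 i ^+ 2.

Lemma bfE K a b : bf K a b = \sum_i \sum_j a 0 i * K i j * b 0 j.
Proof.
rewrite /bf mxE; under eq_bigr do rewrite !mxE big_distrl /=.
rewrite exchange_big /=; apply: eq_bigr => i _; apply: eq_bigr => j _.
by rewrite ?mxE.
Qed.

Lemma bfDl K a b c : bf K (a + b) c = bf K a c + bf K b c.
Proof. by rewrite /bf !mulmxDl mxE. Qed.
Lemma bfDr K a b c : bf K c (a + b) = bf K c a + bf K c b.
Proof. by rewrite /bf linearD /= mulmxDr mxE. Qed.
Lemma bfZl K t a c : bf K (t *: a) c = t * bf K a c.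
Proof. by rewrite /bf -!scalemxAl mxE. Qed.
Lemma bfZr K t a c : bf K c (t *: a) = t * bf K c a.
Proof. by rewrite /bf linearZ /= -scalemxAr mxE. Qed.
Lemma bf_sym K a b : K^T = K -> bf K a b = bf K b a.
Proof.
move=> sK; rewrite /bf.
have -> : (a *m K *m b^T) 0 0 = ((a *m K *m b^T)^T) 0 0 by rewrite [RHS]mxE.
by rewrite !trmx_mul trmxK sK mulmxA.
Qed.
Lemma bf1 a : bf 1%:M a a = nrm2 a.
Proof.
rewrite /bf mulmx1 /nrm2 mxE; apply: eq_bigr => i _.
by rewrite !mxE expr2.
Qed.
Lemma e00B (A B : 'M[R]_1) : (A - B) 0 0 = A 0 0 - B 0 0.
Proof. by rewrite !mxE. Qed.
Lemma bfB K1 K2 a b : bf (K1 - K2) a b = bf K1 a b - bf K2 a b.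
Proof. by rewrite /bf mulmxBr mulmxBl e00B. Qed.
Lemma bfZK t K a b : bf (t *: K) a b = t * bf K a b.
Proof. by rewrite /bf -scalemxAr -scalemxAl mxE. Qed.

Lemma nrm2_ge0 y : 0 <= nrm2 y.
Proof. by apply: sumr_ge0 => i _; rewrite sqr_ge0. Qed.

Lemma nrm2_eq0 y : nrm2 y = 0 -> y = 0.
Proof.
move=> /eqP; rewrite psumr_eq0; last by move=> i _; rewrite sqr_ge0.
move=> /allP H; apply/matrixP => i j; rewrite (ord1 i) mxE.
by have := H j (mem_index_enum _); rewrite sqrf_eq0 => /eqP.
Qed.

Lemma lagrange K x : K^T = K -> (forall y, bf K y y <= 0) -> bf K x x = 0 ->
  x *m K = 0.
Proof.
move=> sK Hle Hx; set r := x *m K.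
have Nr : bf K x r = nrm2 r by rewrite -bf1 /bf mulmx1.
have key : forall t, 2 * t * nrm2 r + t ^+ 2 * bf K r r <= 0.
  move=> t; have := Hle (x + t *: r).
  rewrite !bfDl !bfDr !bfZl !bfZr Hx (bf_sym r x sK) Nr.
  by move=> H; apply: le_trans H; rewrite le_eqVlt; apply/orP; left; apply/eqP; ring.
have G0 := Hle r; have N0 := nrm2_ge0 r.
apply: nrm2_eq0; apply/eqP; rewrite eq_le N0 andbT; apply/negP => /negP.
rewrite -ltNge => Npos.
set G := bf K r r in G0 key.
have dpos : 0 < 1 - G by lra.
have := key (nrm2 r / (1 - G)).
set s := nrm2 r / (1 - G).
have spos : 0 < s by apply: divr_gt0.
have sG : s * (1 - G) = nrm2 r by rewrite /s mulrVK // unitfE gt_eqF.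
nra.
Qed.


Lemma nrm2Z t y : nrm2 (t *: y) = t ^+ 2 * nrm2 y.
Proof. by rewrite -!bf1 bfZl bfZr mulrA expr2. Qed.

Lemma nrm20 : nrm2 0 = 0.
Proof. by rewrite /nrm2 big1 // => i _; rewrite mxE expr0n. Qed.

Lemma largest_of M x : M^T = M -> nrm2 x = 1 ->
  (forall y, bf M y y <= bf M x x * nrm2 y) ->
  largest_eigenvalue M (bf M x x) /\ x *m M = bf M x x *: x.
Proof.
move=> sM nx Hmax; set mu := bf M x x.
set K := M - mu *: 1%:M.
have bK : forall y, bf K y y = bf M y y - mu * nrm2 y.
  by move=> y; rewrite /K bfB bfZK bf1.
have sK : K^T = K by rewrite /K linearB /= linearZ /= trmx1 sM.
have xK : x *m K = 0.
  apply: lagrange => //.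
    by move=> y; rewrite bK subr_le0.
  by rewrite bK nx mulr1 subrr.
have xM : x *m M = mu *: x.
  by apply/eqP; rewrite -subr_eq0 -xK /K mulmxBr -scalemxAr mulmx1.
split=> //; split.
  apply/eigenvalueP; exists x => //; apply/eqP => x0.
  by move: nx; rewrite x0 nrm20 => /eqP; rewrite eq_sym oner_eq0.
move=> nu /eigenvalueP [y yM y0].
have Ny : 0 < nrm2 y.
  rewrite lt_neqAle nrm2_ge0 andbT eq_sym; apply/eqP => /nrm2_eq0 /eqP.
  by rewrite (negbTE y0).
have : bf M y y = nu * nrm2 y.
  have -> : bf M y y = bf 1%:M (y *m M) y by rewrite /bf mulmx1.
  by rewrite yM bfZl bf1.
move=> E; have := Hmax y; rewrite E.
by rewrite ler_pM2r.
Qed.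

Lemma cont_sum (I : finType) (F : I -> 'rV[R]_n -> R) :
  (forall i, continuous (F i)) -> continuous (fun y => \sum_i F i y).
Proof.
move=> H.
suff: forall s : seq I, continuous (fun y => \sum_(i <- s) F i y) by apply.
elim => [|i s IH].
  under eq_fun do rewrite big_nil; exact: cst_continuous.
under eq_fun do rewrite big_cons.
by move=> y; apply: continuousD; [exact: H | exact: IH].
Qed.

Lemma coordc i : continuous (fun y : 'rV[R]_n => y 0 i).
Proof. exact: coord_continuous. Qed.

Lemma bf_cont M : continuous (fun y => bf M y y).
Proof.
under eq_fun do rewrite bfE.
apply: cont_sum => i; apply: cont_sum => j.
move=> y; apply: (continuousM (s := fun y => y 0 i * M i j) (t := fun y => y 0 j)); last exact: coordc.
apply: (continuousM (s := fun y => y 0 i) (t := fun y => M i j)); first exact: coordc.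
exact: cst_continuous.
Qed.

Lemma nrm2_cont : continuous nrm2.
Proof.
rewrite /nrm2; apply: cont_sum => i y.
under eq_fun do rewrite expr2.
by apply: (continuousM (s := fun y => y 0 i) (t := fun y => y 0 i)); exact: coordc.
Qed.

Lemma rayleigh_exists M : (0 < n)%N ->
  exists2 x, nrm2 x = 1 & forall y, bf M y y <= bf M x x * nrm2 y.
Proof.
move=> n0.
set A := [set y : 'rV[R]_n | nrm2 y = 1]%classic.
have An : (A !=set0)%classic.
  exists (\row_j ((j == Ordinal n0)%:R : R)).
  rewrite /A /= /nrm2 (bigD1 (Ordinal n0)) //= big1 ?addr0.
    by rewrite mxE eqxx expr1n.
  by move=> j /negbTE jn; rewrite mxE jn expr0n.
have Acl : closed A.
  apply: (@preimage_closed _ _ nrm2 [set x : R | x = 1]%classic); last exact: closed_eq.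
  by move=> y _; exact: nrm2_cont.
have Acp : compact A.
  apply: (subclosed_compact Acl (@rV_compact _ n (fun=> `[(-1 : R), 1]%classic) (fun=> @segment_compact _ _ _))).
  move=> y /= Ay i; rewrite /= in_itv /=.
  have : y 0 i ^+ 2 <= 1.
    rewrite -Ay /nrm2 (bigD1 i) //= lerDl; apply: sumr_ge0 => j _; exact: sqr_ge0.
  move=> h; apply/andP; split; nra.
have [c cA cmax] := @EVT_max_rV R n (fun y => bf M y y) A An Acp
  (continuous_subspaceT (@bf_cont M)).
have nc : nrm2 c = 1 by move: cA; rewrite inE.
exists c => // y.
have [y0|ynz] := eqVneq (nrm2 y) 0.
  move/nrm2_eq0: (y0) => ->; rewrite nrm20 mulr0.
  by rewrite /bf mul0mx mul0mx mxE.
have Np : 0 < nrm2 y by rewrite lt_neqAle eq_sym ynz nrm2_ge0.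
set s := Num.sqrt (nrm2 y).
have sp : 0 < s by rewrite sqrtr_gt0.
have s2 : s ^+ 2 = nrm2 y by rewrite sqr_sqrtr // ltW.
have := cmax (s^-1 *: y); rewrite inE /A /= nrm2Z exprVn s2 mulVf //.
move=> /(_ erefl); rewrite bfZl bfZr mulrA -expr2 exprVn s2.
move=> h; move: h; rewrite -(ler_pM2r Np) mulrAC mulVf ?mul1r //.
Qed.

End LA.
Local Open Scope ring_scope.

Section Q.
Variable R : realType.
Variable n : nat.
Implicit Types x : 'I_n -> R.

Definition hh x i j : R := x i ^+ 2 + x i * x j.
Definition cc (g : rel 'I_n) i j : R := (j != i)%:R * (1 + (g i j)%:R).
Definition Fq (g : rel 'I_n) x : R := \sum_i \sum_j cc g i j * hh x i j.
Definition Ncol (g : rel 'I_n) x u : R :=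
  \sum_k cc g u k * x u + \sum_i cc g i u * x i.
Definition vx (y : 'rV[R]_n) : 'I_n -> R := fun i => y 0 i.

Lemma bf_distQ (g : rel 'I_n) y :
  bf (distQ R g) y y = \sum_i \sum_j (dist g i j)%:R * hh (vx y) i j.
Proof.
rewrite bfE; apply: eq_bigr => i _.
have -> : \sum_j y 0 i * distQ R g i j * y 0 j =
   \sum_j (y 0 i * ((i == j)%:R * (transmission g i)%:R) * y 0 j) +
   \sum_j (y 0 i * (dist g i j)%:R * y 0 j).
  rewrite -big_split /=; apply: eq_bigr => j _; rewrite mxE.
  by case: (i == j); rewrite /= ?mul1r ?mul0r; ring.
rewrite (bigD1 i) //= big1 ?addr0; last first.
  by move=> j /negbTE ji; rewrite eq_sym ji mul0r mulr0 mul0r.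
rewrite eqxx mul1r /transmission natr_sum.
rewrite mulr_sumr mulr_suml -big_split /=; apply: eq_bigr => j _.
by rewrite /hh /vx; ring.
Qed.

Lemma col_distQ (g : rel 'I_n) (y : 'rV[R]_n) (u : 'I_n) :
  (y *m distQ R g) 0 u =
  \sum_k (dist g u k)%:R * y 0 u + \sum_i (dist g i u)%:R * y 0 i.
Proof.
rewrite mxE.
have -> : \sum_i y 0 i * distQ R g i u =
   \sum_i (y 0 i * ((i == u)%:R * (transmission g i)%:R)) +
   \sum_i ((dist g i u)%:R * y 0 i).
  rewrite -big_split /=; apply: eq_bigr => i _; rewrite mxE.
  by case: (i == u); rewrite /= ?mul1r ?mul0r; ring.
congr (_ + _).
rewrite (bigD1 u) //= big1 ?addr0; last first.
  by move=> j /negbTE ji; rewrite ji mul0r mulr0.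
rewrite eqxx mul1r /transmission natr_sum mulr_sumr.
by apply: eq_bigr => k _; rewrite mulrC.
Qed.

Definition nonneg (x : 'I_n -> R) := forall i, 0 <= x i.

Lemma cc_nat (g : rel 'I_n) i j : cc g i j = ((j != i) * (1 + g i j))%:R.
Proof. by rewrite /cc natrM natrD. Qed.

Lemma hh_ge0 x i j : nonneg x -> 0 <= hh x i j.
Proof. by move=> h; rewrite /hh addr_ge0 ?sqr_ge0 ?mulr_ge0. Qed.

Lemma bf_le_Fq (g e : rel 'I_n) (y : 'rV[R]_n) :
  (forall i j, (dist g i j <= (j != i) * (1 + e i j))%N) ->
  nonneg (vx y) -> bf (distQ R g) y y <= Fq e (vx y).
Proof.
move=> H y0; rewrite bf_distQ /Fq; apply: ler_sum => i _; apply: ler_sum => j _.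
apply: ler_wpM2r; first exact: hh_ge0.
rewrite cc_nat ler_nat; exact: H.
Qed.

Lemma Fq_le_bf (g e : rel 'I_n) (y : 'rV[R]_n) :
  (forall i j, ((j != i) * (1 + e i j) <= dist g i j)%N) ->
  nonneg (vx y) -> Fq e (vx y) <= bf (distQ R g) y y.
Proof.
move=> H y0; rewrite bf_distQ /Fq; apply: ler_sum => i _; apply: ler_sum => j _.
apply: ler_wpM2r; first exact: hh_ge0.
rewrite cc_nat ler_nat; exact: H.
Qed.

Lemma col_le_Ncol (g e : rel 'I_n) (y : 'rV[R]_n) (u : 'I_n) :
  (forall i j, (dist g i j <= (j != i) * (1 + e i j))%N) ->
  nonneg (vx y) -> (y *m distQ R g) 0 u <= Ncol e (vx y) u.
Proof.
move=> H y0; rewrite col_distQ /Ncol; apply: lerD; apply: ler_sum => i _;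
  (apply: ler_wpM2r; first exact: y0); rewrite cc_nat ler_nat; exact: H.
Qed.

Lemma Ncol_le_col (g e : rel 'I_n) (y : 'rV[R]_n) (u : 'I_n) :
  (forall i j, ((j != i) * (1 + e i j) <= dist g i j)%N) ->
  nonneg (vx y) -> Ncol e (vx y) u <= (y *m distQ R g) 0 u.
Proof.
move=> H y0; rewrite col_distQ /Ncol; apply: lerD; apply: ler_sum => i _;
  (apply: ler_wpM2r; first exact: y0); rewrite cc_nat ler_nat; exact: H.
Qed.

Lemma cc_irr (g : rel 'I_n) i j : irreflexive g ->
  cc g i j = (j != i)%:R + (g i j)%:R.
Proof.
move=> ig; rewrite /cc; case: (eqVneq j i) => [->|]; first by rewrite ig /= mul0r addr0.
by rewrite /= mul1r.
Qed.

Lemma Fq_diff (g1 g : rel 'I_n) x : irreflexive g1 -> irreflexive g ->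
  Fq g1 x - Fq g x = \sum_i \sum_j ((g1 i j)%:R - (g i j)%:R) * hh x i j.
Proof.
move=> i1 i0; rewrite /Fq -sumrB; apply: eq_bigr => i _.
rewrite -sumrB; apply: eq_bigr => j _; rewrite !cc_irr //; ring.
Qed.

Lemma Ncol_diff (g1 g : rel 'I_n) x u : irreflexive g1 -> irreflexive g ->
  Ncol g1 x u - Ncol g x u = \sum_k ((g1 u k)%:R - (g u k)%:R) * x u
      + \sum_i ((g1 i u)%:R - (g i u)%:R) * x i.
Proof.
move=> i1 i0; rewrite /Ncol.
have E : forall F1 F2 : 'I_n -> R, \sum_k F1 k - \sum_k F2 k = \sum_k (F1 k - F2 k).
  by move=> F1 F2; rewrite sumrB.
rewrite opprD addrACA !E; congr (_ + _); apply: eq_bigr => k _;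
  rewrite !cc_irr //; ring.
Qed.

Lemma sum_delta (v : 'I_n) (G : 'I_n -> R) : \sum_i (i == v)%:R * G i = G v.
Proof.
rewrite (bigD1 v) //= big1 ?addr0 ?eqxx ?mul1r //.
by move=> i /negbTE ->; rewrite mul0r.
Qed.

End Q.
Local Open Scope ring_scope.

Section R4.
Variable R : realType.

Lemma boolRM (a b : bool) : ((a && b)%:R : R) = a%:R * b%:R.
Proof. by case: a; case: b; rewrite /= ?mul1r ?mul0r. Qed.

Lemma bool_id (E X1 X2 Y1 Y2 : bool) : ~~ (X1 && X2) -> ~~ (Y1 && Y2) ->
  (X1 || X2 -> E) -> (Y1 || Y2 -> ~~ E) ->
  ((((E && ~~ (X1 || X2)) || (Y1 || Y2)))%:R : R) =
    E%:R - X1%:R - X2%:R + Y1%:R + Y2%:R.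
Proof.
case: E; case: X1; case: X2; case: Y1; case: Y2 => //= _ _ h1 h2;
  (try by move: (h1 isT)); (try by move: (h2 isT)); ring.
Qed.

Variable n : nat.

Lemma D1 (v : 'I_n) (f : 'I_n -> 'I_n -> R) :
  \sum_i \sum_j (i == v)%:R * f i j = \sum_j f v j.
Proof.
under eq_bigr do rewrite -mulr_sumr.
exact: sum_delta.
Qed.

Lemma D2 (v : 'I_n) (f : 'I_n -> 'I_n -> R) :
  \sum_i \sum_j (j == v)%:R * f i j = \sum_i f i v.
Proof.
apply: eq_bigr => i _; exact: sum_delta.
Qed.

Lemma split4 (A B C D : 'I_n -> 'I_n -> R) :
  \sum_i \sum_j (A i j + B i j + C i j + D i j) =
  \sum_i \sum_j A i j + \sum_i \sum_j B i j + \sum_i \sum_j C i j + \sum_i \sum_j D i j.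
Proof.
rewrite -!big_split /=; apply: eq_bigr => i _; by rewrite -!big_split.
Qed.

Variable e : rel 'I_n.
Hypothesis se : symmetric e.
Hypothesis ie : irreflexive e.
Hypothesis ac : acyclic e.
Variables (u v : 'I_n) (q : seq 'I_n).
Hypothesis pth : path e u (rcons q v).
Hypothesis un : uniq (u :: rcons q v).
Hypothesis dg : all (fun x => deg e x == 2)%N q.

Local Notation g1 := (gts e u v (ww u q)).
Local Notation S := (SS e u v q).

Lemma g1_irr : irreflexive g1.
Proof. apply: gts_irr => //; exact: (SSu se ie ac pth un dg). Qed.

Lemma gtsR i j : ((g1 i j)%:R : R) =
  (e i j)%:R - ((i == v) && S j)%:R - ((j == v) && S i)%:R
  + ((i == u) && S j)%:R + ((j == u) && S i)%:R.
Proof.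
have Su := SSu se ie ac pth un dg; have Sv := SSv se ie ac pth un dg.
have Snu := SS_ne_u se ie ac pth un dg.
rewrite gts_char; apply: bool_id.
- apply/negP => /andP [/andP [/eqP -> _] /andP [_ h]].
  by move: Sv; rewrite h.
- apply/negP => /andP [/andP [/eqP -> _] /andP [_ h]].
  by move: Su; rewrite h.
- case/orP => /andP [/eqP -> /SS_e h] //; by rewrite se.
- case/orP => /andP [/eqP -> /Snu h] //; by rewrite se.
Qed.

Lemma Fq_gts (x : 'I_n -> R) : Fq g1 x - Fq e x =
  \sum_k (S k)%:R * ((x u - x v) * (x u + x v + 2 * x k)).
Proof.
rewrite Fq_diff //; last exact: g1_irr.
transitivity (\sum_i \sum_j (
   (i == v)%:R * (- ((S j)%:R * hh x i j))
 + (j == v)%:R * (- ((S i)%:R * hh x i j))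
 + (i == u)%:R * ((S j)%:R * hh x i j)
 + (j == u)%:R * ((S i)%:R * hh x i j))).
  apply: eq_bigr => i _; apply: eq_bigr => j _.
  rewrite gtsR !boolRM; ring.
rewrite split4 !D1 !D2 -!big_split /=; apply: eq_bigr => k _.
rewrite /hh; ring.
Qed.

Lemma Ncol_gts (x : 'I_n -> R) : Ncol g1 x u - Ncol e x u =
  \sum_k (S k)%:R * (x u + x k).
Proof.
have Su := SSu se ie ac pth un dg.
have uvF : (u == v) = false by apply/negbTE; exact: (uv un).
rewrite Ncol_diff //; last exact: g1_irr.
rewrite -big_split /=; apply: eq_bigr => k _.
rewrite !gtsR uvF eqxx (negbTE Su) /= !andbF /=.
case: (k == v); case: (k == u); rewrite /= ?mul0r ?mul1r; ring.
Qed.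

End R4.
Local Open Scope ring_scope.

Section Main.
Variable R : realType.
Variable n : nat.

Lemma spec_nonneg (M : 'M[R]_n) : (0 < n)%N -> M^T = M ->
  (forall i j, 0 <= M i j) ->
  exists mu (x : 'rV[R]_n), [/\ largest_eigenvalue M mu, nrm2 x = 1,
     nonneg (vx x), x *m M = mu *: x &
     forall y, bf M y y <= mu * nrm2 y] /\ bf M x x = mu.
Proof.
move=> n0 sM Mp.
have [x0 nx0 H0] := rayleigh_exists M n0.
set x := \row_i `|x0 0 i|.
have nx : nrm2 x = 1.
  by rewrite -nx0; apply: eq_bigr => i _; rewrite mxE real_normK // num_real.
have le0 : bf M x0 x0 <= bf M x x.
  rewrite !bfE; apply: ler_sum => i _; apply: ler_sum => j _.
  rewrite !mxE; apply: le_trans (ler_norm _) _.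
  by rewrite !normrM (ger0_norm (Mp i j)).
have Hx : forall y, bf M y y <= bf M x x * nrm2 y.
  move=> y; apply: le_trans (H0 y) _; apply: ler_wpM2r => //.
  exact: nrm2_ge0.
have [L E] := largest_of sM nx Hx.
exists (bf M x x), x; split => //; split => //.
by move=> i; rewrite /vx mxE normr_ge0.
Qed.

Lemma distQ_sym (g : rel 'I_n) : symmetric g -> (distQ R g)^T = distQ R g.
Proof.
move=> sg; apply/matrixP => i j; rewrite !mxE eq_sym dist_sym //.
by case: (eqVneq j i) => [->|].
Qed.

Lemma distQ_ge0 (g : rel 'I_n) i j : 0 <= distQ R g i j.
Proof. by rewrite mxE; case: (i == j); rewrite ?addr_ge0 ?ler0n ?add0r. Qed.

Lemma comp_sym (g : rel 'I_n) : symmetric g -> symmetric (complement g).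
Proof. by move=> sg a b; rewrite /complement /= eq_sym sg. Qed.

Lemma sum_pos (S : pred 'I_n) (f : 'I_n -> R) :
  (forall k, S k -> 0 <= f k) -> (exists2 k, S k & 0 < f k) ->
  0 < \sum_k (S k)%:R * f k.
Proof.
move=> H [k Sk fk]; rewrite (bigD1 k) //= Sk mul1r.
have : 0 <= \sum_(i | i != k) (S i)%:R * f i.
  by apply: sumr_ge0 => i _; case Si: (S i); rewrite ?mul0r // mul1r H.
lra.
Qed.

Lemma sum_ge0' (S : pred 'I_n) (f : 'I_n -> R) :
  (forall k, S k -> 0 <= f k) -> 0 <= \sum_k (S k)%:R * f k.
Proof.
by move=> H; apply: sumr_ge0 => i _; case Si: (S i); rewrite ?mul0r // mul1r H.
Qed.

Lemma Fq_reindex (g : rel 'I_n) (s : 'I_n -> 'I_n) (x : 'I_n -> R) :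
  (forall a, s (s a) = a) ->
  Fq g (fun i => x (s i)) = Fq (fun a b => g (s a) (s b)) x.
Proof.
move=> inv; have sinj : injective s by move=> a b h; rewrite -(inv a) h inv.
rewrite /Fq (reindex_inj sinj); apply: eq_bigr => i _.
rewrite (reindex_inj sinj); apply: eq_bigr => j _.
by rewrite /cc /hh !inv (inj_eq sinj).
Qed.

End Main.

Theorem mainTheorem2 (R : realType) (n : nat) (e : rel 'I_n)
    (u v : 'I_n) (q : seq 'I_n) :
  is_tree e -> diam_ge e 4 ->
  path e u (rcons q v) -> uniq (u :: rcons q v) ->
  all (fun x => deg e x == 2)%N q ->
  (deg e u != 1)%N -> (deg e v != 1)%N ->
  exists mu mu1 : R,
    [/\ largest_eigenvalue (distQ R (complement e)) mu,
        largest_eigenvalue (distQ R (complement (gts e u v (last u q)))) mu1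
      & mu1 > mu].
Proof.
move=> [[se ie] _ ac] dm pth un dg du dv.
have uvn := uv un.
have n0 : (0 < n)%N := leq_ltn_trans (leq0n _) (ltn_ord u).
have n2 : (1 < n)%N.
  rewrite ltnNge; apply/negP => n1; move: uvn; apply/negP; rewrite negbK.
  apply/eqP; apply: val_inj => /=; have := ltn_ord u; have := ltn_ord v; move: n1; clear; lia.
set e1 := gts e u v (last u q).
have se1 : symmetric e1 by exact: gts_sym.
have ie1 : irreflexive e1 by exact: (g1_irr se ie ac pth un dg).
have sM0 := distQ_sym R (comp_sym se).
have sM1 := distQ_sym R (comp_sym se1).
have [mu [x [[L0 nx xnn xM0 H0] bx]]] := spec_nonneg n0 sM0 (@distQ_ge0 R n _).
have [mu1 [z0 [[L1 _ _ _ H1] _]]] := spec_nonneg n0 sM1 (@distQ_ge0 R n _).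
exists mu, mu1; split => //.
have UB : forall i j, (dist (complement e) i j <= (j != i) * (1 + e i j))%N.
  move=> i j; case: (eqVneq j i) => [->|ji]; first by rewrite dist_self.
  by rewrite mul1n comp_ub.
have LB : forall i j, ((j != i) * (1 + e1 i j) <= dist (complement e1) i j)%N.
  by move=> i j; case: (eqVneq j i) => [->|ji] //; rewrite mul1n comp_lb.
have A0 : mu <= Fq e (vx x) by rewrite -bx; exact: bf_le_Fq UB xnn.
have B1 : forall y, nrm2 y = 1 -> nonneg (vx y) -> Fq e1 (vx y) <= mu1.
  move=> y ny yn; apply: le_trans (Fq_le_bf LB yn) _.
  by rewrite -[mu1]mulr1 -ny H1.
case: (leP (vx x v) (vx x u)) => xuv.
- have D : 0 <= Fq e1 (vx x) - Fq e (vx x).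
    rewrite (Fq_gts se ie ac pth un dg); apply: sum_ge0' => k _.
    apply: mulr_ge0; first by rewrite subr_ge0.
    by rewrite !addr_ge0 ?mulr_ge0 ?xnn.
  rewrite ltNge; apply/negP => h.
  have F1 := Fq_le_bf LB xnn.
  have eqb : bf (distQ R (complement e1)) x x = mu1.
    apply/eqP; rewrite eq_le; apply/andP; split; first by rewrite -[mu1]mulr1 -nx H1.
    lra.
  have [_ xM1] := @largest_of R n _ x sM1 nx
     (fun y => eq_ind_r (fun m => bf _ y y <= m * nrm2 y) (H1 y) eqb).
  have xu0 : 0 < vx x u.
    rewrite lt_neqAle xnn andbT; apply/negP => /eqP xu.
    have col0 : (x *m distQ R (complement e)) 0 u = 0.
      by rewrite xM0 mxE -[x 0 u]/(vx x u) -xu mulr0.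
    move: col0; rewrite mxE => /eqP; rewrite psumr_eq0; last first.
      by move=> i _; rewrite mulr_ge0 ?distQ_ge0 //; exact: xnn.
    move=> /allP Hz.
    have x0 : x = 0.
      apply/matrixP => a i; rewrite (ord1 a) mxE.
      case: (eqVneq i u) => [->|iu]; first by rewrite -[x 0 u]/(vx x u) -xu.
      have := Hz i (mem_index_enum _); rewrite mulf_eq0 => /orP [/eqP //|].
      rewrite mxE (negbTE iu) add0r pnatr_eq0 => /eqP d0.
      have ui : u != i by rewrite eq_sym.
      by have := comp_lb e n2 ui; rewrite d0.
    by move: nx; rewrite x0 nrm20 => /eqP; rewrite eq_sym oner_eq0.
  have C1 := Ncol_le_col u LB xnn.
  have C0 := col_le_Ncol u UB xnn.
  have ND := Ncol_gts se ie ac pth un dg (vx x).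
  have [k Sk] := SS_ex se pth dv.
  have Pos : 0 < \sum_k (SS e u v q k)%:R * (vx x u + vx x k).
    apply: sum_pos.
      by move=> j _; rewrite addr_ge0 ?xnn.
    by exists k => //; have := xnn k; lra.
  move: C1 C0; rewrite xM1 xM0 eqb !mxE -[x 0 u]/(vx x u) => C1 C0.
  have : mu1 * vx x u <= mu * vx x u by rewrite ler_wpM2r // ltW.
  rewrite -/e1 in ND; lra.
- set s := sigr u v q.
  have sinv := sig_inv un.
  set z : 'rV[R]_n := \row_i x 0 (s i).
  have nz : nrm2 z = 1.
    rewrite -nx /nrm2 [in RHS](reindex_inj (sig_inj un)).
    by apply: eq_bigr => i _; rewrite mxE.
  have zn : nonneg (vx z) by move=> i; rewrite /vx mxE; exact: xnn.
  have E : Fq e1 (vx z) = Fq (gts e v u (ww v (rev q))) (vx x).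
    have -> : vx z = (fun i => vx x (s i)) by apply: funext => i; rewrite /vx mxE.
    rewrite Fq_reindex //; apply: eq_bigr => i _; apply: eq_bigr => j _.
    by rewrite /cc /= /e1 -[last u q]/(ww u q) (iso se ie ac pth un dg).
  have D : 0 < Fq (gts e v u (ww v (rev q))) (vx x) - Fq e (vx x).
    rewrite (Fq_gts se ie ac (pth' se pth) (un' un) (dg' dg)).
    apply: sum_pos.
      move=> k _; apply: mulr_ge0; first by rewrite subr_ge0 ltW.
      by rewrite !addr_ge0 ?mulr_ge0 ?xnn.
    have [k Sk] := SS_ex se (pth' se pth) du.
    exists k => //; apply: mulr_gt0; first by rewrite subr_gt0.
    by have := xnn u; have := xnn k; lra.
  by have := B1 z nz zn; rewrite E; lra.
Qed.
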